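(* Let $\alpha=\frac{r}{s}+k\sqrt{p/q}$ be a positive irrational, where $r\in\mathbb Z$, $p,q,s\in\mathbb N$, $k\in\{-1,1\}$, $s$ odd, $\gcd(r,s)=1$, $\gcd(p,q)=1$. Let $d_1=\gcd(ps^2-qr^2,qs)$ and $N=\frac{pqs^4}{d_1^2}$ (a positive nonsquare integer). (1) If $x^2-Ny^2=-1$ has no integer solution, then for $A\in GL(2,\mathbb Z)$, $\pi(A)$ restricts to an isometric automorphism of $\mathcal A_\alpha$ if and only if $$A=\begin{bmatrix} -\frac{qrs}{d_1}y_1+x_1 & \frac{qs^2}{d_1}y_1\\ \frac{ps^2-qr^2}{d_1}y_1 & \frac{qrs}{d_1}y_1+x_1\end{bmatrix}^n$$ for some $n\in\mathbb Z$, where $(x_1,y_1)$ is the fundamental solution of $x^2-Ny^2=1$. (2) If $x^2-Ny^2=-1$ has an integer solution, then $\pi(A)$ restricts to an isometric automorphism of $\mathcal A_\alpha$ if and only if $$A=\begin{bmatrix} -\frac{qrs}{d_1}ky_1'+x_1' & \frac{qs^2}{d_1}ky_1'\\ \frac{ps^2-qr^2}{d_1}ky_1' & \frac{qrs}{d_1}ky_1'+x_1'\end{bmatrix}^n$$ for some $n\in\mathbb Z$, where $(x_1',y_1')$ is the fundamental solution of $x^2-Ny^2=-1$.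
   Context: For a positive irrational $\alpha$, $\mathcal A_\alpha=\{f\in C(\mathbb T^2): \hat f(m,n)=0 \text{ whenever } m+\alpha n<0\}$ ($\mathbb T$ the unit circle, $\hat f$ the Fourier transform on $\mathbb Z^2$), a uniform algebra with the sup norm. For $A=\begin{bmatrix} a&b\\ c&d\end{bmatrix}\in GL(2,\mathbb Z)$, $\pi(A)(f)=f\circ\varphi$ with $\varphi(z,w)=(z^aw^b,z^cw^d)$. For a positive nonsquare integer $N$ and $e\in\{1,-1\}$, the fundamental solution of $x^2-Ny^2=e$ (when a solution exists) is the solution $(x_1,y_1)$ in positive integers with $x_1$ smallest. *)

(* Defs.v *)
From Stdlib Require Export Reals ZArith.
Open Scope R_scope.

(** * Functions on the torus T^2
    We identify T^2 with R^2 / (2πZ)^2 via (s,t) |-> (e^{is}, e^{it}).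
    A complex number is a pair (real part, imaginary part). *)
Definition CT2fun := R -> R -> (R * R).

Definition periodic2 (f : CT2fun) : Prop :=
  forall s t, f (s + 2 * PI) t = f s t /\ f s (t + 2 * PI) = f s t.

Definition continuous2 (f : CT2fun) : Prop :=
  forall s t eps, 0 < eps -> exists delta, 0 < delta /\
    forall s' t', Rabs (s' - s) < delta -> Rabs (t' - t) < delta ->
      Rabs (fst (f s' t') - fst (f s t)) < eps /\
      Rabs (snd (f s' t') - snd (f s t)) < eps.

Definition in_CT2 (f : CT2fun) : Prop := continuous2 f /\ periodic2 f.

(** Fourier transform on Z^2, for continuous f:
    hat f(m,n) = (1/4π^2) ∫_0^{2π}∫_0^{2π} f(s,t) e^{-i(ms+nt)} ds dt,
    written as the limit of the (uniform-grid) Riemann sums of this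
    Riemann integral, with K+1 grid points in each direction. *)
Definition grid (K j : nat) : R := 2 * PI * INR j / INR (S K).

Definition rsum_re (f : CT2fun) (m n : Z) (K : nat) : R :=
  / (INR (S K) * INR (S K)) *
  sum_f_R0 (fun j => sum_f_R0 (fun l =>
     let u := IZR m * grid K j + IZR n * grid K l in
     fst (f (grid K j) (grid K l)) * cos u + snd (f (grid K j) (grid K l)) * sin u) K) K.

Definition rsum_im (f : CT2fun) (m n : Z) (K : nat) : R :=
  / (INR (S K) * INR (S K)) *
  sum_f_R0 (fun j => sum_f_R0 (fun l =>
     let u := IZR m * grid K j + IZR n * grid K l in
     snd (f (grid K j) (grid K l)) * cos u - fst (f (grid K j) (grid K l)) * sin u) K) K.

Definition fourier_coef (f : CT2fun) (m n : Z) (c : R * R) : Prop :=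
  Un_cv (rsum_re f m n) (fst c) /\ Un_cv (rsum_im f m n) (snd c).

Definition in_A (alpha : R) (f : CT2fun) : Prop :=
  in_CT2 f /\
  forall m n : Z, IZR m + alpha * IZR n < 0 -> fourier_coef f m n (0, 0).

Record M2 := mkM2 { e11 : Z; e12 : Z; e21 : Z; e22 : Z }.

Definition detM (A : M2) : Z := (e11 A * e22 A - e12 A * e21 A)%Z.

Definition inGL2Z (A : M2) : Prop := detM A = 1%Z \/ detM A = (-1)%Z.

Definition mulM (A B : M2) : M2 :=
  mkM2 (e11 A * e11 B + e12 A * e21 B)%Z (e11 A * e12 B + e12 A * e22 B)%Z
       (e21 A * e11 B + e22 A * e21 B)%Z (e21 A * e12 B + e22 A * e22 B)%Z.

Definition idM : M2 := mkM2 1 0 0 1.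

(** inverse in GL(2,Z) (correct when det A = ±1) *)
Definition invM (A : M2) : M2 :=
  let d := detM A in
  mkM2 (d * e22 A)%Z (- d * e12 A)%Z (- d * e21 A)%Z (d * e11 A)%Z.

Fixpoint powM_nat (A : M2) (k : nat) : M2 :=
  match k with O => idM | S k' => mulM A (powM_nat A k') end.

Definition powM (A : M2) (n : Z) : M2 :=
  if (0 <=? n)%Z then powM_nat A (Z.to_nat n) else powM_nat (invM A) (Z.to_nat (- n)).

(** pi(A) f = f ∘ φ, φ(z,w) = (z^a w^b, z^c w^d); in the coordinates
    z = e^{is}, w = e^{it}: φ(s,t) = (a s + b t, c s + d t). *)
Definition piA (A : M2) (f : CT2fun) : CT2fun :=
  fun s t => f (IZR (e11 A) * s + IZR (e12 A) * t) (IZR (e21 A) * s + IZR (e22 A) * t).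

Definition supnorm_le (f g : CT2fun) : Prop :=
  forall M, (forall s t, sqrt (fst (g s t) ^ 2 + snd (g s t) ^ 2) <= M) ->
            (forall s t, sqrt (fst (f s t) ^ 2 + snd (f s t) ^ 2) <= M).

Definition isom_aut_A (alpha : R) (A : M2) : Prop :=
  (forall f, in_A alpha f -> in_A alpha (piA A f)) /\
  (forall g, in_A alpha g -> exists f, in_A alpha f /\ forall s t, piA A f s t = g s t) /\
  (forall f, in_A alpha f -> supnorm_le f (piA A f) /\ supnorm_le (piA A f) f).

Definition pell_solvable (N e : Z) : Prop :=
  exists x y : Z, (x * x - N * y * y)%Z = e.

Definition fundamental_solution (N e x1 y1 : Z) : Prop :=
  (0 < x1)%Z /\ (0 < y1)%Z /\ (x1 * x1 - N * y1 * y1)%Z = e /\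
  forall x y : Z, (0 < x)%Z -> (0 < y)%Z -> (x * x - N * y * y)%Z = e -> (x1 <= x)%Z.

Definition alpha_of (r p q s k : Z) : R :=
  IZR r / IZR s + IZR k * sqrt (IZR p / IZR q).

Definition irrational (x : R) : Prop :=
  ~ exists a b : Z, b <> 0%Z /\ x = IZR a / IZR b.

Definition d1_of (r p q s : Z) : Z := Z.gcd (p * s * s - q * r * r) (q * s).

Definition N_of (r p q s : Z) : Z :=
  (p * q * s ^ 4 / (d1_of r p q s * d1_of r p q s))%Z.

(** The generating matrix with parameter kk (kk = 1 in case (1), kk = k in case (2)) *)
Definition genM (r p q s kk x y : Z) : M2 :=
  let d := d1_of r p q s in
  mkM2 (- (q * r * s / d) * kk * y + x)%Z ((q * s * s / d) * kk * y)%Z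
       (((p * s * s - q * r * r) / d) * kk * y)%Z ((q * r * s / d) * kk * y + x)%Z.

(* Main.v *)
Require Import Defs.
From Stdlib Require Import Reals ZArith Lia Lra Psatz Znumtheory FunctionalExtensionality.
From HB Require structures.
From mathcomp Require ssreflect ssrfun ssrbool eqtype ssrnat seq choice fintype bigop.
Open Scope R_scope.


Definition lam (al : R) (A : M2) : R := IZR (e11 A) + al * IZR (e12 A).
Definition Sfix (al : R) (A : M2) : Prop :=
  inGL2Z A /\ IZR (e21 A) + al * IZR (e22 A) = al * lam al A /\ 0 < lam al A.

Lemma irr_lin al : irrational al -> forall X Y : Z, IZR X + al * IZR Y = 0 -> X = 0%Z /\ Y = 0%Z.
Proof.
  intros Hi X Y H.
  destruct (Z.eq_dec Y 0) as [HY|HY].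
  - subst. rewrite Rmult_0_r, Rplus_0_r in H. split; [apply eq_IZR; exact H|reflexivity].
  - exfalso. apply Hi. exists (-X)%Z, Y. split; [exact HY|].
    rewrite opp_IZR. assert (IZR Y <> 0) by (apply not_0_IZR; exact HY).
    field_simplify_eq; [|exact H0]. lra.
Qed.

Lemma detM_mul A B : detM (mulM A B) = (detM A * detM B)%Z.
Proof. destruct A, B; unfold detM, mulM; simpl; ring. Qed.

Lemma inGL2Z_mul A B : inGL2Z A -> inGL2Z B -> inGL2Z (mulM A B).
Proof. unfold inGL2Z; rewrite detM_mul; intros [H|H] [H'|H']; rewrite H, H'; auto. Qed.

Lemma S_mul al A B : Sfix al A -> Sfix al B -> Sfix al (mulM A B) /\ lam al (mulM A B) = lam al A * lam al B.
Proof.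
  destruct A as [a b c d], B as [a' b' c' d']; unfold Sfix, lam; simpl.
  intros [HA [EA PA]] [HB [EB PB]].
  assert (Hc : IZR c = al * (IZR a + al * IZR b) - al * IZR d) by lra.
  assert (Hc' : IZR c' = al * (IZR a' + al * IZR b') - al * IZR d') by lra.
  assert (L : IZR (a * a' + b * c') + al * IZR (a * b' + b * d') = (IZR a + al * IZR b) * (IZR a' + al * IZR b')).
  { rewrite !plus_IZR, !mult_IZR, Hc'. ring. }
  split; [|exact L].
  split; [apply (inGL2Z_mul (mkM2 a b c d) (mkM2 a' b' c' d')); assumption|].
  rewrite L. split; [|apply Rmult_lt_0_compat; assumption].
  rewrite !plus_IZR, !mult_IZR, Hc, Hc'. ring.
Qed.

Lemma S_inv al A : Sfix al A -> Sfix al (invM A) /\ lam al (invM A) = / lam al A.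
Proof.
  destruct A as [a b c d]; unfold Sfix, lam, invM, detM; simpl.
  intros [HA [EA PA]].
  assert (Hc : IZR c = al * (IZR a + al * IZR b) - al * IZR d) by lra.
  set (dl := (a * d - b * c)%Z) in *.
  assert (Hdl : IZR dl * IZR dl = 1).
  { unfold inGL2Z, detM in HA; simpl in HA. destruct HA as [H|H]; fold dl in H; rewrite H; simpl; lra. }
  assert (Hd : IZR dl = (IZR a + al * IZR b) * (IZR d - al * IZR b)).
  { unfold dl. rewrite minus_IZR, !mult_IZR, Hc. ring. }
  assert (L : IZR (dl * d) + al * IZR (- dl * b) = / (IZR a + al * IZR b)).
  { rewrite !mult_IZR, opp_IZR. apply Rmult_eq_reg_l with (IZR a + al * IZR b); [|lra].
    rewrite Rinv_r by lra. rewrite <- Hdl.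
    replace ((IZR a + al * IZR b) * (IZR dl * IZR d + al * (- IZR dl * IZR b))) with (IZR dl * ((IZR a + al * IZR b) * (IZR d - al * IZR b))) by ring.
    rewrite <- Hd. reflexivity. }
  split; [|exact L].
  split.
  { unfold inGL2Z, detM in *; simpl in *. fold dl in HA.
    destruct HA as [H|H]; [left|right]; rewrite H; unfold dl in H; nia. }
  rewrite L. split; [|apply Rinv_0_lt_compat; lra].
  rewrite <- L. rewrite !mult_IZR, !opp_IZR, Hc. ring.
Qed.

Lemma S_id al : Sfix al idM /\ lam al idM = 1.
Proof. unfold Sfix, lam, idM, inGL2Z, detM; simpl. split; [split; [left; reflexivity| split; lra]|lra]. Qed.

Lemma S_pow_nat al G n : Sfix al G -> Sfix al (powM_nat G n) /\ lam al (powM_nat G n) = lam al G ^ n.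
Proof.
  intros HG. induction n as [|n IH]; simpl.
  - exact (S_id al).
  - destruct IH as [H1 H2]. destruct (S_mul al _ _ HG H1) as [H3 H4]. split; [exact H3|].
    rewrite H4, H2. reflexivity.
Qed.

Lemma S_pow al G z : Sfix al G -> Sfix al (powM G z) /\ lam al (powM G z) = powerRZ (lam al G) z.
Proof.
  intros HG. unfold powM. destruct z as [|p|p]; simpl.
  - exact (S_id al).
  - apply S_pow_nat; exact HG.
  - destruct (S_inv al G HG) as [H1 H2].
    destruct (S_pow_nat al _ (Pos.to_nat p) H1) as [H3 H4]. split; [exact H3|].
    rewrite H4, H2, pow_inv. reflexivity.
Qed.

Lemma S_eq al (Hi : irrational al) A B : Sfix al A -> Sfix al B -> lam al A = lam al B -> A = B.
Proof.
  destruct A as [a b c d], B as [a' b' c' d']; unfold Sfix, lam; simpl.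
  intros [_ [EA _]] [_ [EB _]] E.
  destruct (irr_lin al Hi (a - a') (b - b')) as [H1 H2].
  { rewrite !minus_IZR. lra. }
  assert (a = a') by lia. assert (b = b') by lia. subst a' b'.
  destruct (irr_lin al Hi (c - c') (d - d')) as [H3 H4].
  { rewrite !minus_IZR. lra. }
  f_equal; lia.
Qed.

Lemma floor_pow mu x : 1 < mu -> 0 < x -> exists n : Z, powerRZ mu n <= x < powerRZ mu (n + 1).
Proof.
  intros Hmu Hx.
  assert (Hl : 0 < ln mu) by (rewrite <- ln_1; apply ln_increasing; lra).
  set (t := ln x / ln mu).
  destruct (archimed t) as [A1 A2].
  exists (up t - 1)%Z.
  rewrite !powerRZ_Rpower by lra. unfold Rpower.
  replace (up t - 1 + 1)%Z with (up t) by ring.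
  rewrite minus_IZR.
  assert (E : ln x = t * ln mu) by (unfold t; field; lra).
  split.
  - rewrite <- (exp_ln x) by lra. 
    destruct (Req_dec ((IZR (up t) - 1) * ln mu) (ln x)) as [Heq|Hne]; [rewrite Heq; lra|].
    left. apply exp_increasing. rewrite E. 
    assert ((IZR (up t) - 1) <= t) by lra.
    assert ((IZR (up t) - 1) * ln mu <= t * ln mu) by (apply Rmult_le_compat_r; lra).
    rewrite E in Hne. lra.
  - rewrite <- (exp_ln x) by lra. apply exp_increasing. rewrite E.
    apply Rmult_lt_compat_r; lra.
Qed.

Lemma gen al (Hi : irrational al) G mu (HG : Sfix al G) (Hmu : 1 < mu)
  (HGm : lam al G = mu \/ lam al G = / mu)
  (Hmin : forall A, Sfix al A -> ~ (1 < lam al A < mu)) :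
  forall A, Sfix al A -> exists n, A = powM G n.
Proof.
  intros A HA.
  destruct (floor_pow mu (lam al A) Hmu (proj2 (proj2 HA))) as [n [Hn1 Hn2]].
  assert (Hex : exists m, lam al (powM G m) = powerRZ mu n).
  { destruct HGm as [E|E].
    - exists n. rewrite (proj2 (S_pow al G n HG)), E. reflexivity.
    - exists (- n)%Z. rewrite (proj2 (S_pow al G _ HG)), E, powerRZ_inv', powerRZ_neg', Rinv_inv. reflexivity. }
  destruct Hex as [m Hm].
  exists m.
  destruct (S_pow al G m HG) as [Sm _].
  destruct (S_inv al _ Sm) as [Si Li].
  destruct (S_mul al _ _ HA Si) as [SC LC].
  assert (Hp : 0 < powerRZ mu n) by (apply powerRZ_lt; lra).
  rewrite powerRZ_add in Hn2 by lra. simpl in Hn2. rewrite Rmult_1_r in Hn2.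
  rewrite Li, Hm in LC.
  assert (Hc1 : 1 <= lam al (mulM A (invM (powM G m)))).
  { rewrite LC. apply Rmult_le_reg_r with (powerRZ mu n); [exact Hp|].
    rewrite Rmult_assoc, Rinv_l by lra. lra. }
  assert (Hc2 : lam al (mulM A (invM (powM G m))) < mu).
  { rewrite LC. apply Rmult_lt_reg_r with (powerRZ mu n); [exact Hp|].
    rewrite Rmult_assoc, Rinv_l by lra. lra. }
  assert (Hc : lam al (mulM A (invM (powM G m))) = 1).
  { destruct Hc1 as [Hc1|Hc1]; [exfalso; apply (Hmin _ SC); lra|auto]. }
  apply (S_eq al Hi); [exact HA|exact Sm|].
  rewrite Hm. rewrite LC in Hc.
  apply Rmult_eq_reg_r with (/ powerRZ mu n); [|apply Rinv_neq_0_compat; lra].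
  rewrite Hc, Rinv_r by lra. reflexivity.
Qed.


Lemma setup r p q s (hp : (0 < p)%Z) (hq : (0 < q)%Z) (hs : (0 < s)%Z) :
  exists d e f, (0 < d)%Z /\ (d*e = q*s)%Z /\ (d*f = p*s*s - q*r*r)%Z /\
   N_of r p q s = (e*e*r*r + e*s*f)%Z /\ Z.gcd e f = 1%Z /\
   (forall kk x y, genM r p q s kk x y = mkM2 (x - e*r*(kk*y)) (e*s*(kk*y)) (f*(kk*y)) (x + e*r*(kk*y)))%Z.
Proof.
  set (d := d1_of r p q s).
  assert (Hd0 : (0 <= d)%Z) by apply Z.gcd_nonneg.
  assert (Hdn : d <> 0%Z).
  { intro H. apply Z.gcd_eq_0_r in H. nia. }
  destruct (Z.gcd_divide_r (p*s*s - q*r*r) (q*s)) as [e He].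
  destruct (Z.gcd_divide_l (p*s*s - q*r*r) (q*s)) as [f Hf].
  fold (d1_of r p q s) in He, Hf. fold d in He, Hf.
  exists d, e, f.
  assert (E1 : (d*e = q*s)%Z) by lia.
  assert (E2 : (d*f = p*s*s - q*r*r)%Z) by lia.
  split; [lia|]. split; [exact E1|]. split; [exact E2|].
  split.
  { unfold N_of. fold d.
    replace (p*q*s^4)%Z with ((e*e*r*r + e*s*f) * (d*d))%Z.
    - apply Z.div_mul. nia.
    - assert (q * (p*q*s^4) = q * ((e*e*r*r + e*s*f) * (d*d)))%Z.
      { replace (q * ((e*e*r*r + e*s*f) * (d*d)))%Z with ((d*e)*(d*e)*r*r*q + (d*e)*s*(d*f)*q)%Z by ring.
        rewrite E1, E2. ring. }
      apply Z.mul_reg_l with q; lia. }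
  split.
  { assert (G : d = Z.gcd (d*f) (d*e)).
    { unfold d at 1, d1_of. rewrite E1, E2. reflexivity. }
    rewrite Z.gcd_mul_mono_l, Z.abs_eq in G by lia.
    rewrite Z.gcd_comm. apply Z.mul_reg_l with d; [exact Hdn|]. rewrite Z.mul_1_r. symmetry. exact G. }
  intros kk x y. unfold genM. fold d.
  replace (q*r*s)%Z with ((q*s)*r)%Z by ring. rewrite He.
  replace (e*d*r)%Z with ((e*r)*d)%Z by ring. replace (e*d*s)%Z with ((e*s)*d)%Z by ring.
  rewrite <- E2. replace (d*f)%Z with (f*d)%Z by ring.
  rewrite !Z.div_mul by lia. f_equal; ring.
Qed.

Section Alpha.
Variables (r p q s k d e f : Z).
Hypotheses (hp : (0 < p)%Z) (hq : (0 < q)%Z) (hs : (0 < s)%Z) (hk : k = 1%Z \/ k = (-1)%Z)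
  (hd : (0 < d)%Z) (E1 : (d*e = q*s)%Z) (E2 : (d*f = p*s*s - q*r*r)%Z).

Let al := alpha_of r p q s k.
Let sg := sqrt (IZR p / IZR q).
Let rho := IZR e * IZR s * sg.

Lemma sg_pos : 0 < sg.
Proof. unfold sg. apply sqrt_lt_R0. apply Rdiv_lt_0_compat; apply IZR_lt; lia. Qed.

Lemma sg_sq : sg * sg * IZR q = IZR p.
Proof.
  unfold sg. rewrite sqrt_sqrt. field. apply not_0_IZR; lia.
  apply Rlt_le, Rdiv_lt_0_compat; apply IZR_lt; lia.
Qed.

Lemma k_sq : IZR k * IZR k = 1.
Proof. destruct hk; subst; simpl; lra. Qed.

Lemma al_lin : IZR s * al - IZR r = IZR k * IZR s * sg.
Proof. unfold al, alpha_of. fold sg. field. apply not_0_IZR; lia. Qed.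

Lemma e_pos : (0 < e)%Z.
Proof. nia. Qed.

Lemma quad : IZR e * IZR s * al * al - 2 * IZR e * IZR r * al - IZR f = 0.
Proof.
  assert (Hd : IZR d <> 0) by (apply not_0_IZR; lia).
  apply Rmult_eq_reg_l with (IZR d); [|exact Hd].
  rewrite Rmult_0_r.
  assert (H1 : IZR d * IZR e = IZR q * IZR s) by (rewrite <- !mult_IZR; f_equal; exact E1).
  assert (H2 : IZR d * IZR f = IZR p * IZR s * IZR s - IZR q * IZR r * IZR r)
    by (rewrite <- !mult_IZR, <- minus_IZR; f_equal; exact E2).
  replace (IZR d * (IZR e * IZR s * al * al - 2 * IZR e * IZR r * al - IZR f))
    with ((IZR d * IZR e) * IZR s * al * al - 2 * (IZR d * IZR e) * IZR r * al - IZR d * IZR f) by ring.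
  rewrite H1, H2.
  replace (IZR q * IZR s * IZR s * al * al - 2 * (IZR q * IZR s) * IZR r * al -
    (IZR p * IZR s * IZR s - IZR q * IZR r * IZR r))
   with (IZR q * ((IZR s * al - IZR r) * (IZR s * al - IZR r)) - IZR p * IZR s * IZR s) by ring.
  rewrite al_lin.
  replace (IZR q * (IZR k * IZR s * sg * (IZR k * IZR s * sg)))
   with ((IZR k * IZR k) * (sg * sg * IZR q) * IZR s * IZR s) by ring.
  rewrite k_sq, sg_sq. ring.
Qed.

Lemma rho_pos : 0 < rho.
Proof.
  unfold rho. pose proof sg_pos. pose proof e_pos.
  apply Rmult_lt_0_compat; [apply Rmult_lt_0_compat; apply IZR_lt; lia|exact H].
Qed.

Lemma rho_sq : rho * rho = IZR (e*e*r*r + e*s*f).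
Proof.
  assert (Hq : IZR q <> 0) by (apply not_0_IZR; lia).
  apply Rmult_eq_reg_r with (IZR q); [|exact Hq].
  unfold rho.
  replace (IZR e * IZR s * sg * (IZR e * IZR s * sg) * IZR q) with (IZR e * IZR s * IZR e * IZR s * (sg * sg * IZR q)) by ring.
  rewrite sg_sq. rewrite <- !mult_IZR. f_equal.
  apply Z.mul_reg_l with d; [lia|].
  replace (d * (e*s*e*s*p))%Z with (e*e*s*s*p*d)%Z by ring.
  replace (d * ((e*e*r*r + e*s*f) * q))%Z with (e*e*r*r*q*d + e*s*q*(d*f))%Z by ring.
  rewrite E2. replace (e*s*q)%Z with (e*(q*s))%Z by ring. rewrite <- E1. ring.
Qed.

Definition formM (X Y : Z) : M2 := mkM2 (X - e*r*Y) (e*s*Y) (f*Y) (X + e*r*Y).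

Lemma formM_lam X Y : lam al (formM X Y) = IZR X + IZR k * IZR Y * rho.
Proof.
  unfold lam, formM; simpl. rewrite minus_IZR, !mult_IZR.
  unfold rho. transitivity (IZR X + IZR e * IZR Y * (IZR s * al - IZR r)); [ring|].
  rewrite al_lin. ring.
Qed.

Lemma formM_det X Y : detM (formM X Y) = (X*X - (e*e*r*r + e*s*f)*Y*Y)%Z.
Proof. unfold detM, formM; simpl; ring. Qed.

Lemma formM_S X Y : (X*X - (e*e*r*r + e*s*f)*Y*Y = 1 \/ X*X - (e*e*r*r + e*s*f)*Y*Y = -1)%Z ->
  0 < IZR X + IZR k * IZR Y * rho -> Sfix al (formM X Y).
Proof.
  intros Hd Hp. split; [unfold inGL2Z; rewrite formM_det; exact Hd|].
  split; [|rewrite formM_lam; exact Hp].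
  unfold lam, formM; simpl. rewrite minus_IZR, plus_IZR, !mult_IZR.
  pose proof quad.
  replace (IZR f * IZR Y + al * (IZR X + IZR e * IZR r * IZR Y) -
    al * (IZR X - IZR e * IZR r * IZR Y + al * (IZR e * IZR s * IZR Y)))
   with (- IZR Y * (IZR e * IZR s * al * al - 2 * IZR e * IZR r * al - IZR f)) by ring.
  nra.
Qed.

Hypotheses (hsodd : Z.odd s = true) (hrs : Z.gcd r s = 1%Z) (hef : Z.gcd e f = 1%Z)
  (hirr : irrational al).

Lemma S_form A : Sfix al A -> exists X Y, A = formM X Y.
Proof.
  destruct A as [a b c dd]. intros [_ [EA _]]. unfold lam in EA; simpl in EA.
  pose proof quad as Q.
  destruct (irr_lin al hirr (b*f - e*s*c) (e*s*(a-dd) + 2*e*r*b)) as [H2 H1].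
  { rewrite !plus_IZR, !minus_IZR, !mult_IZR.
    transitivity (-(IZR e*IZR s)*(IZR c + al*IZR dd - al*(IZR a + al*IZR b)) - IZR b*(IZR e * IZR s * al * al - 2 * IZR e * IZR r * al - IZR f)); [rewrite ?minus_IZR; ring|].
    rewrite Q. replace (IZR c + al*IZR dd - al*(IZR a + al*IZR b)) with 0 by lra. ring. }
  pose proof e_pos as He.
  assert (H1' : (s*(a-dd) + 2*r*b = 0)%Z).
  { apply Z.mul_reg_l with e; [lia|]. rewrite Z.mul_0_r, <- H1. ring. }
  assert (Hs2r : rel_prime s (2*r)).
  { apply rel_prime_mult.
    - apply Zgcd_1_rel_prime. rewrite (Z.div2_odd s), hsodd. simpl Z.b2z.
      rewrite Z.gcd_comm. replace (2 * Z.div2 s + 1)%Z with (1 + Z.div2 s * 2)%Z by ring.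
      rewrite Z.gcd_add_mult_diag_r. reflexivity.
    - apply rel_prime_sym, Zgcd_1_rel_prime. exact hrs. }
  assert (Hsb : (s | b)%Z).
  { apply Gauss with (2*r)%Z; [|exact Hs2r]. exists (-(a-dd))%Z. lia. }
  destruct Hsb as [b' Hb']. subst b.
  assert (Had : (a - dd = -2*r*b')%Z).
  { apply Z.mul_reg_l with s; [lia|]. nia. }
  assert (Hc1 : (b' * f = e * c)%Z).
  { apply Z.mul_reg_l with s; [lia|]. nia. }
  assert (Heb : (e | b')%Z).
  { apply Gauss with f; [exists c; lia|apply Zgcd_1_rel_prime; exact hef]. }
  destruct Heb as [Y HY]. subst b'.
  assert (Hc : c = (f*Y)%Z).
  { apply Z.mul_reg_l with e; [lia|]. nia. }
  exists (a + e*r*Y)%Z, Y. unfold formM. f_equal; nia.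
Qed.


Let NN := (e*e*r*r + e*s*f)%Z.

Lemma NN_pos : (0 < NN)%Z.
Proof. apply lt_IZR. unfold NN. rewrite <- rho_sq. pose proof rho_pos. nra. Qed.

Lemma no_between ep x1 y1 X Z : (ep = 1 \/ ep = -1)%Z -> fundamental_solution NN ep x1 y1 ->
  (X*X - NN*Z*Z = ep)%Z -> ~ (1 < IZR X + IZR Z * rho < IZR x1 + IZR y1 * rho).
Proof.
  intros Hep [Hx1 [Hy1 [Hf1 Hmin]]] HXZ [Hv1 Hv2].
  pose proof rho_pos as Hr. pose proof rho_sq as Hr2. fold NN in Hr2.
  assert (Hn : IZR X * IZR X - IZR NN * IZR Z * IZR Z = IZR ep) by (rewrite <- !mult_IZR, <- minus_IZR; f_equal; exact HXZ).
  rewrite <- Hr2 in Hn.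
  set (v := IZR X + IZR Z * rho) in *.
  set (w := IZR X - IZR Z * rho).
  assert (Hvw : v * w = IZR ep) by (unfold v, w; rewrite <- Hn; ring).
  assert (Hw : -1 < w < 1).
  { destruct Hep as [E|E]; rewrite E in Hvw; simpl in Hvw.
    - assert (w = / v) by (apply Rmult_eq_reg_l with v; [rewrite Rinv_r by lra; exact Hvw|lra]).
      subst w. split. assert (0 < / v) by (apply Rinv_0_lt_compat; lra). rewrite H in *. lra.
      rewrite H. rewrite <- Rinv_1. apply Rinv_lt_contravar; lra.
    - assert (w = - / v) by (apply Rmult_eq_reg_l with v; [rewrite Ropp_mult_distr_r_reverse, Rinv_r by lra; exact Hvw|lra]).
      rewrite H. assert (/ v < 1) by (rewrite <- Rinv_1; apply Rinv_lt_contravar; lra).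
      assert (0 < / v) by (apply Rinv_0_lt_compat; lra). lra. }
  assert (HX : (0 < X)%Z).
  { apply lt_IZR. assert (IZR X = (v + w) / 2) by (unfold v, w; field). lra. }
  assert (HZ : (0 < Z)%Z).
  { apply lt_IZR. assert (IZR Z * rho = (v - w) / 2) by (unfold v, w; field).
    assert (0 < IZR Z * rho) by lra. nra. }
  pose proof (Hmin X Z HX HZ HXZ) as Hle.
  assert (Hyz : (y1 <= Z)%Z).
  { pose proof NN_pos. assert (x1*x1 <= X*X)%Z by nia.
    assert (NN*(y1*y1) <= NN*(Z*Z))%Z by nia.
    assert (y1*y1 <= Z*Z)%Z by (apply Z.mul_le_mono_pos_l with NN; lia).
    nia. }
  apply IZR_le in Hle. apply IZR_le in Hyz.
  assert (IZR y1 * rho <= IZR Z * rho) by (apply Rmult_le_compat_r; lra).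
  unfold v in Hv2. lra.
Qed.

Lemma detM_inv A : inGL2Z A -> detM (invM A) = detM A.
Proof.
  destruct A as [a b c dd]; unfold inGL2Z, invM; simpl; unfold detM; simpl. intros [H|H]; rewrite H; nia.
Qed.

Lemma case1 x1 y1 : ~ pell_solvable NN (-1) -> fundamental_solution NN 1 x1 y1 ->
  forall Am, Sfix al Am <-> exists n, Am = powM (formM x1 (1*y1)) n.
Proof.
  intros Hns Hfs Am0. rewrite Z.mul_1_l.
  pose proof rho_pos as Hr. pose proof rho_sq as Hr2. fold NN in Hr2.
  pose proof Hfs as Hfs0. destruct Hfs0 as [Hx1 [Hy1 [Hf1 Hmin]]].
  assert (Hn : IZR x1 * IZR x1 - rho * rho * IZR y1 * IZR y1 = 1).
  { rewrite Hr2, <- !mult_IZR, <- minus_IZR. rewrite Hf1. reflexivity. }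
  apply IZR_lt in Hx1. apply IZR_lt in Hy1.
  set (mu := IZR x1 + IZR y1 * rho).
  assert (Hmu : 1 < mu).
  { unfold mu. assert (0 < IZR y1 * rho) by nra. nra. }
  assert (HlG : lam al (formM x1 y1) = mu \/ lam al (formM x1 y1) = / mu).
  { rewrite formM_lam. destruct hk as [E|E]; rewrite E; [left; unfold mu; ring|right].
    apply Rmult_eq_reg_l with mu; [|lra]. rewrite Rinv_r by lra. unfold mu. rewrite <- Hn. simpl. ring. }
  assert (HG : Sfix al (formM x1 y1)).
  { apply formM_S. left. exact Hf1. rewrite <- formM_lam.
    destruct HlG as [E|E]; rewrite E; [lra|apply Rinv_0_lt_compat; lra]. }
  split.
  - apply (gen al hirr _ mu HG Hmu HlG).
    intros Am HA Hb. destruct (S_form Am HA) as [X [Y ->]].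
    destruct HA as [HA _]. unfold inGL2Z in HA. rewrite formM_det in HA. fold NN in HA.
    rewrite formM_lam in Hb.
    destruct HA as [HA|HA].
    + apply (no_between 1 x1 y1 X (k*Y) (or_introl eq_refl) Hfs).
      * destruct hk as [E|E]; rewrite E; nia.
      * rewrite mult_IZR. unfold mu in Hb. exact Hb.
    + apply Hns. exists X, Y. exact HA.
  - intros [n ->]. apply S_pow. exact HG.
Qed.

Lemma case2 x1 y1 : fundamental_solution NN (-1) x1 y1 ->
  forall Am, Sfix al Am <-> exists n, Am = powM (formM x1 (k*y1)) n.
Proof.
  intros Hfs Am0.
  pose proof rho_pos as Hr. pose proof rho_sq as Hr2. fold NN in Hr2.
  pose proof Hfs as Hfs0. destruct Hfs0 as [Hx1 [Hy1 [Hf1 Hmin]]].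
  apply IZR_lt in Hx1. apply IZR_lt in Hy1.
  set (mu := IZR x1 + IZR y1 * rho).
  assert (Hmu : 1 < mu).
  { unfold mu. assert (1 <= IZR x1) by (apply IZR_le; apply lt_IZR in Hx1; lia).
    assert (0 < IZR y1 * rho) by nra. nra. }
  assert (HlG : lam al (formM x1 (k*y1)) = mu).
  { rewrite formM_lam, mult_IZR. unfold mu.
    replace (IZR x1 + IZR k * (IZR k * IZR y1) * rho) with (IZR x1 + (IZR k * IZR k) * IZR y1 * rho) by ring.
    rewrite k_sq. ring. }
  assert (HdG : detM (formM x1 (k*y1)) = (-1)%Z).
  { rewrite formM_det. fold NN. rewrite <- Hf1. destruct hk as [E|E]; rewrite E; ring. }
  assert (HG : Sfix al (formM x1 (k*y1))).
  { apply formM_S. right. rewrite <- formM_det. exact HdG. rewrite <- formM_lam. lra. }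
  assert (Hneg : forall C, Sfix al C -> detM C = (-1)%Z -> ~ (1 < lam al C < mu)).
  { intros C HC HdC Hb. destruct (S_form C HC) as [X [Y ->]].
    rewrite formM_det in HdC. fold NN in HdC. rewrite formM_lam in Hb.
    apply (no_between (-1) x1 y1 X (k*Y) (or_intror eq_refl) Hfs).
    * destruct hk as [E|E]; rewrite E; nia.
    * rewrite mult_IZR. unfold mu in Hb. exact Hb. }
  split.
  - apply (gen al hirr _ mu HG Hmu (or_introl HlG)).
    intros Am HA Hb.
    destruct (proj1 HA) as [HdA|HdA]; [|exact (Hneg Am HA HdA Hb)].
    destruct (S_inv al Am HA) as [Si Li].
    destruct (S_mul al _ _ Si HG) as [SC LC].
    apply (Hneg _ SC).
    + rewrite detM_mul, detM_inv, HdA, HdG by exact (proj1 HA). reflexivity.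
    + rewrite LC, Li, HlG. split.
      * apply Rmult_lt_reg_l with (lam al Am); [lra|]. rewrite <- Rmult_assoc, Rinv_r by lra. lra.
      * apply Rmult_lt_reg_l with (lam al Am); [lra|]. rewrite <- Rmult_assoc, Rinv_r by lra.
        assert (0 < mu) by lra. nra.
  - intros [n ->]. apply S_pow. exact HG.
Qed.

End Alpha.


Module Reidx.
Import HB.structures.
Import mathcomp.boot.ssreflect mathcomp.boot.ssrfun mathcomp.boot.ssrbool mathcomp.boot.eqtype mathcomp.boot.ssrnat mathcomp.boot.seq mathcomp.boot.choice mathcomp.boot.fintype mathcomp.boot.bigop.

Lemma Rplus_assoc' : associative Rplus. Proof. move=> x y z; by rewrite Rplus_assoc. Qed.
HB.instance Definition _ := Monoid.isComLaw.Build R 0%R Rplus Rplus_assoc' Rplus_comm Rplus_0_l.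

Lemma sumR_big (F : nat -> R) K : sum_f_R0 F K = \big[Rplus/0%R]_(i < K.+1) F i.
Proof.
  elim: K => [|K IH]; first by rewrite big_ord_recr big_ord0 /= Rplus_0_l.
  by rewrite big_ord_recr /= -IH.
Qed.

Lemma sumR2_big (T : nat -> nat -> R) K :
  sum_f_R0 (fun j => sum_f_R0 (fun l => T j l) K) K =
  \big[Rplus/0%R]_(x : 'I_K.+1 * 'I_K.+1) T x.1 x.2.
Proof.
  rewrite sumR_big. under eq_bigr do rewrite sumR_big. by rewrite pair_big.
Qed.

Definition toI (M : nat) (HM : (0 < M)%coq_nat) (z : Z) : 'I_M.
Proof.
  refine (@Ordinal M (Z.to_nat (z mod Z.of_nat M)) _).
  apply/ltP. have H := Z.mod_pos_bound z (Z.of_nat M) ltac:(lia). lia.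
Defined.
Arguments toI {M} HM z.

Lemma reindex2 (K : nat) (F : Z -> Z -> R)
  (Fper : forall u v, F u v = F (u mod Z.of_nat K.+1)%Z (v mod Z.of_nat K.+1)%Z)
  (a b c d : Z) (hdet : (a*d - b*c = 1)%Z \/ (a*d - b*c = -1)%Z) :
  sum_f_R0 (fun j => sum_f_R0 (fun l => F (a * Z.of_nat j + b * Z.of_nat l)%Z (c * Z.of_nat j + d * Z.of_nat l)%Z) K) K
  = sum_f_R0 (fun j => sum_f_R0 (fun l => F (Z.of_nat j) (Z.of_nat l)) K) K.
Proof.
  have HM : (0 < K.+1)%coq_nat by lia.
  rewrite !sumR2_big.
  pose sg := fun x : 'I_K.+1 * 'I_K.+1 =>
    (toI HM (a * Z.of_nat x.1 + b * Z.of_nat x.2)%Z, toI HM (c * Z.of_nat x.1 + d * Z.of_nat x.2)%Z).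
  have Hsg : injective sg.
  { move=> [x1 x2] [y1 y2] [E1 E2].
    move: E1 E2. change (Zpos (PosDef.Pos.of_succ_nat K)) with (Z.of_nat K.+1). move=> E1' E2'.
    set M := Z.of_nat K.+1 in E1' E2'.
    have HMp : (0 < M)%Z by rewrite /M; lia.
    have B1 := Z.mod_pos_bound (a * Z.of_nat x1 + b * Z.of_nat x2)%Z M HMp.
    have B2 := Z.mod_pos_bound (a * Z.of_nat y1 + b * Z.of_nat y2)%Z M HMp.
    have B3 := Z.mod_pos_bound (c * Z.of_nat x1 + d * Z.of_nat x2)%Z M HMp.
    have B4 := Z.mod_pos_bound (c * Z.of_nat y1 + d * Z.of_nat y2)%Z M HMp.
    have D1 := Z.div_mod (a * Z.of_nat x1 + b * Z.of_nat x2)%Z M ltac:(lia).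
    have D2 := Z.div_mod (a * Z.of_nat y1 + b * Z.of_nat y2)%Z M ltac:(lia).
    have D3 := Z.div_mod (c * Z.of_nat x1 + d * Z.of_nat x2)%Z M ltac:(lia).
    have D4 := Z.div_mod (c * Z.of_nat y1 + d * Z.of_nat y2)%Z M ltac:(lia).
    set u1 := ((a * Z.of_nat x1 + b * Z.of_nat x2) mod M)%Z in E1' B1 D1.
    set u2 := ((a * Z.of_nat y1 + b * Z.of_nat y2) mod M)%Z in E1' B2 D2.
    set v1 := ((c * Z.of_nat x1 + d * Z.of_nat x2) mod M)%Z in E2' B3 D3.
    set v2 := ((c * Z.of_nat y1 + d * Z.of_nat y2) mod M)%Z in E2' B4 D4.
    have Eu : u1 = u2 by lia.
    have Ev : v1 = v2 by lia.
    set q1 := ((a * Z.of_nat x1 + b * Z.of_nat x2) / M)%Z in D1.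
    set q2 := ((a * Z.of_nat y1 + b * Z.of_nat y2) / M)%Z in D2.
    set q3 := ((c * Z.of_nat x1 + d * Z.of_nat x2) / M)%Z in D3.
    set q4 := ((c * Z.of_nat y1 + d * Z.of_nat y2) / M)%Z in D4.
    have X1 := ltn_ord x1. have X2 := ltn_ord x2. have Y1 := ltn_ord y1. have Y2 := ltn_ord y2.
    move/ltP: X1 => X1. move/ltP: X2 => X2. move/ltP: Y1 => Y1. move/ltP: Y2 => Y2.
    set dl := (a*d - b*c)%Z in hdet.
    have Du : (a * (Z.of_nat x1 - Z.of_nat y1) + b * (Z.of_nat x2 - Z.of_nat y2) = M * (q1 - q2))%Z.
    { rewrite Z.mul_sub_distr_l. rewrite Eu in D1. lia. }
    have Dv : (c * (Z.of_nat x1 - Z.of_nat y1) + d * (Z.of_nat x2 - Z.of_nat y2) = M * (q3 - q4))%Z.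
    { rewrite Z.mul_sub_distr_l. rewrite Ev in D3. lia. }
    have Hdl : (dl * dl = 1)%Z by case: hdet => ->.
    have Hx1 : (Z.of_nat x1 - Z.of_nat y1 = M * (dl * (d * (q1 - q2) - b * (q3 - q4))))%Z.
    { have H : (dl * (Z.of_nat x1 - Z.of_nat y1) = d * (M * (q1 - q2)) - b * (M * (q3 - q4)))%Z.
      { rewrite -Du -Dv /dl. ring. }
      rewrite -[LHS]Z.mul_1_l -Hdl -Z.mul_assoc H. ring. }
    have Hx2 : (Z.of_nat x2 - Z.of_nat y2 = M * (dl * (a * (q3 - q4) - c * (q1 - q2))))%Z.
    { have H : (dl * (Z.of_nat x2 - Z.of_nat y2) = a * (M * (q3 - q4)) - c * (M * (q1 - q2)))%Z.
      { rewrite -Du -Dv /dl. ring. }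
      rewrite -[LHS]Z.mul_1_l -Hdl -Z.mul_assoc H. ring. }
    have Ex1 : nat_of_ord x1 = nat_of_ord y1.
    { move: Hx1. move: (dl * (d * (q1 - q2) - b * (q3 - q4)))%Z => t Ht.
      have Hb1 : (- M < M * t < M)%Z by rewrite /M; lia.
      have : t = 0%Z by nia.
      move=> Ht0. rewrite Ht0 in Ht. lia. }
    have Ex2 : nat_of_ord x2 = nat_of_ord y2.
    { move: Hx2. move: (dl * (a * (q3 - q4) - c * (q1 - q2)))%Z => t Ht.
      have Hb1 : (- M < M * t < M)%Z by rewrite /M; lia.
      have : t = 0%Z by nia.
      move=> Ht0. rewrite Ht0 in Ht. lia. }
    by rewrite (ord_inj Ex1) (ord_inj Ex2). }
  rewrite [RHS](reindex_inj Hsg). apply: eq_bigr => [[x1 x2]] _ /=.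
  change (Zpos (PosDef.Pos.of_succ_nat K)) with (Z.of_nat K.+1).
  rewrite !Z2Nat.id; try (apply Z.mod_pos_bound; lia).
  apply Fper.
Qed.
End Reidx.


Lemma cos_Z x z : cos (x + 2 * IZR z * PI) = cos x.
Proof.
  destruct (Z_le_gt_dec 0 z) as [H|H].
  - rewrite <- (Z2Nat.id z) by lia. rewrite <- INR_IZR_INZ. apply cos_period.
  - replace x with ((x + 2 * IZR z * PI) + 2 * INR (Z.to_nat (- z)) * PI) at 2.
    + rewrite cos_period. reflexivity.
    + rewrite INR_IZR_INZ, Z2Nat.id by lia. rewrite opp_IZR. ring.
Qed.

Lemma sin_Z x z : sin (x + 2 * IZR z * PI) = sin x.
Proof.
  destruct (Z_le_gt_dec 0 z) as [H|H].
  - rewrite <- (Z2Nat.id z) by lia. rewrite <- INR_IZR_INZ. apply sin_period.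
  - replace x with ((x + 2 * IZR z * PI) + 2 * INR (Z.to_nat (- z)) * PI) at 2.
    + rewrite sin_period. reflexivity.
    + rewrite INR_IZR_INZ, Z2Nat.id by lia. rewrite opp_IZR. ring.
Qed.

Lemma per_nat1 f : periodic2 f -> forall n s t, f (s + 2 * INR n * PI) t = f s t.
Proof.
  intros Hf n. induction n as [|n IH]; intros s t.
  - simpl. f_equal. ring.
  - rewrite S_INR. replace (s + 2 * (INR n + 1) * PI) with ((s + 2 * INR n * PI) + 2 * PI) by ring.
    rewrite (proj1 (Hf _ t)). apply IH.
Qed.

Lemma per_nat2 f : periodic2 f -> forall n s t, f s (t + 2 * INR n * PI) = f s t.
Proof.
  intros Hf n. induction n as [|n IH]; intros s t.
  - simpl. f_equal. ring.
  - rewrite S_INR. replace (t + 2 * (INR n + 1) * PI) with ((t + 2 * INR n * PI) + 2 * PI) by ring.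
    rewrite (proj2 (Hf s _)). apply IH.
Qed.

Lemma per_Z1 f : periodic2 f -> forall z s t, f (s + 2 * IZR z * PI) t = f s t.
Proof.
  intros Hf z s t. destruct (Z_le_gt_dec 0 z) as [H|H].
  - rewrite <- (Z2Nat.id z) by lia. rewrite <- INR_IZR_INZ. apply per_nat1; exact Hf.
  - pattern s at 2. replace s with ((s + 2 * IZR z * PI) + 2 * INR (Z.to_nat (- z)) * PI) at 1.
    + rewrite per_nat1 by exact Hf. reflexivity.
    + rewrite INR_IZR_INZ, Z2Nat.id by lia. rewrite opp_IZR. ring.
Qed.

Lemma per_Z2 f : periodic2 f -> forall z s t, f s (t + 2 * IZR z * PI) = f s t.
Proof.
  intros Hf z s t. destruct (Z_le_gt_dec 0 z) as [H|H].
  - rewrite <- (Z2Nat.id z) by lia. rewrite <- INR_IZR_INZ. apply per_nat2; exact Hf.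
  - pattern t at 2. replace t with ((t + 2 * IZR z * PI) + 2 * INR (Z.to_nat (- z)) * PI) at 1.
    + rewrite per_nat2 by exact Hf. reflexivity.
    + rewrite INR_IZR_INZ, Z2Nat.id by lia. rewrite opp_IZR. ring.
Qed.

Definition rs (Phi : R * R -> R -> R) (f : CT2fun) (m n : Z) (K : nat) : R :=
  / (INR (S K) * INR (S K)) *
  sum_f_R0 (fun j => sum_f_R0 (fun l =>
     Phi (f (grid K j) (grid K l)) (IZR m * grid K j + IZR n * grid K l)) K) K.

Definition Phi_re (w : R * R) (u : R) := fst w * cos u + snd w * sin u.
Definition Phi_im (w : R * R) (u : R) := snd w * cos u - fst w * sin u.

Lemma rsum_re_rs f m n K : rsum_re f m n K = rs Phi_re f m n K.
Proof. reflexivity. Qed.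
Lemma rsum_im_rs f m n K : rsum_im f m n K = rs Phi_im f m n K.
Proof. reflexivity. Qed.

Lemma Phi_re_per w x z : Phi_re w (x + 2 * IZR z * PI) = Phi_re w x.
Proof. unfold Phi_re. rewrite cos_Z, sin_Z. reflexivity. Qed.
Lemma Phi_im_per w x z : Phi_im w (x + 2 * IZR z * PI) = Phi_im w x.
Proof. unfold Phi_im. rewrite cos_Z, sin_Z. reflexivity. Qed.

Lemma rs_piA Phi (Hper : forall w x z, Phi w (x + 2 * IZR z * PI) = Phi w x)
  f (Hf : periodic2 f) A (HA : inGL2Z A) m' n' K :
  rs Phi (piA A f) (e11 A * m' + e21 A * n') (e12 A * m' + e22 A * n') K = rs Phi f m' n' K.
Proof.
  destruct A as [a b c d]; simpl.
  unfold rs. f_equal.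
  set (M := INR (S K)).
  assert (HM : 0 < M) by (unfold M; apply lt_0_INR; lia).
  set (h := fun z : Z => 2 * PI * IZR z / M).
  set (F := fun u v : Z => Phi (f (h u) (h v)) (IZR m' * h u + IZR n' * h v)).
  assert (Hg : forall j, grid K j = h (Z.of_nat j)).
  { intro j. unfold grid, h. fold M. rewrite INR_IZR_INZ. reflexivity. }
  transitivity (sum_f_R0 (fun j => sum_f_R0 (fun l => F (a * Z.of_nat j + b * Z.of_nat l)%Z (c * Z.of_nat j + d * Z.of_nat l)%Z) K) K).
  { apply sum_eq. intros j _. apply sum_eq. intros l _.
    unfold F, piA. simpl. rewrite !Hg.
    assert (E1 : IZR a * h (Z.of_nat j) + IZR b * h (Z.of_nat l) = h (a * Z.of_nat j + b * Z.of_nat l)%Z)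
      by (unfold h; rewrite plus_IZR, !mult_IZR; field; lra).
    assert (E2 : IZR c * h (Z.of_nat j) + IZR d * h (Z.of_nat l) = h (c * Z.of_nat j + d * Z.of_nat l)%Z)
      by (unfold h; rewrite plus_IZR, !mult_IZR; field; lra).
    rewrite E1, E2. f_equal.
    unfold h. rewrite !plus_IZR, !mult_IZR. field. lra. }
  transitivity (sum_f_R0 (fun j => sum_f_R0 (fun l => F (Z.of_nat j) (Z.of_nat l)) K) K).
  - apply Reidx.reindex2.
    + intros u v. unfold F.
      assert (HMz : Z.of_nat (S K) <> 0%Z) by lia.
      assert (Hh : forall w, h w = h (w mod Z.of_nat (S K))%Z + 2 * IZR (w / Z.of_nat (S K))%Z * PI).
      { intro w. unfold h. rewrite (Z.div_mod w (Z.of_nat (S K))) at 1 by exact HMz.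
        rewrite plus_IZR, mult_IZR, <- INR_IZR_INZ. fold M. field. lra. }
      rewrite (Hh u), (Hh v).
      rewrite per_Z1, per_Z2 by exact Hf.
      replace (IZR m' * (h (u mod Z.of_nat (S K))%Z + 2 * IZR (u / Z.of_nat (S K))%Z * PI) +
          IZR n' * (h (v mod Z.of_nat (S K))%Z + 2 * IZR (v / Z.of_nat (S K))%Z * PI))
        with ((IZR m' * h (u mod Z.of_nat (S K))%Z + IZR n' * h (v mod Z.of_nat (S K))%Z) + 2 * IZR (m' * (u / Z.of_nat (S K)) + n' * (v / Z.of_nat (S K)))%Z * PI)
        by (rewrite plus_IZR, !mult_IZR; ring).
      apply Hper.
    + exact HA.
  - apply sum_eq. intros j _. apply sum_eq. intros l _. unfold F. rewrite !Hg. reflexivity.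
Qed.


Lemma lin_bound (a b x y dl : R) : 0 < dl -> Rabs x < dl -> Rabs y < dl ->
  Rabs (a * x + b * y) <= (Rabs a + Rabs b) * dl.
Proof.
  intros Hd Hx Hy.
  eapply Rle_trans; [apply Rabs_triang|]. rewrite !Rabs_mult.
  assert (Rabs a * Rabs x <= Rabs a * dl) by (apply Rmult_le_compat_l; [apply Rabs_pos|lra]).
  assert (Rabs b * Rabs y <= Rabs b * dl) by (apply Rmult_le_compat_l; [apply Rabs_pos|lra]).
  lra.
Qed.

Lemma piA_CT2 A f : in_CT2 f -> in_CT2 (piA A f).
Proof.
  destruct A as [a b c d]. intros [Hc Hp]. split.
  - intros s t eps Heps. unfold piA; simpl.
    destruct (Hc (IZR a * s + IZR b * t) (IZR c * s + IZR d * t) eps Heps) as [dl [Hdl H]].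
    set (S := Rabs (IZR a) + Rabs (IZR b) + Rabs (IZR c) + Rabs (IZR d) + 1).
    assert (HS : 1 <= S) by (unfold S; pose proof (Rabs_pos (IZR a)); pose proof (Rabs_pos (IZR b)); pose proof (Rabs_pos (IZR c)); pose proof (Rabs_pos (IZR d)); lra).
    exists (dl / S). split; [apply Rdiv_lt_0_compat; lra|].
    intros s' t' Hs Ht.
    assert (Hd' : 0 < dl / S) by (apply Rdiv_lt_0_compat; lra).
    assert (HSd : S * (dl / S) = dl) by (field; lra).
    apply H.
    + replace (IZR a * s' + IZR b * t' - (IZR a * s + IZR b * t)) with (IZR a * (s' - s) + IZR b * (t' - t)) by ring.
      eapply Rle_lt_trans; [apply lin_bound; eauto|].
      rewrite <- HSd at 2. apply Rmult_lt_compat_r; [exact Hd'|].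
      unfold S. pose proof (Rabs_pos (IZR c)); pose proof (Rabs_pos (IZR d)); lra.
    + replace (IZR c * s' + IZR d * t' - (IZR c * s + IZR d * t)) with (IZR c * (s' - s) + IZR d * (t' - t)) by ring.
      eapply Rle_lt_trans; [apply lin_bound; eauto|].
      rewrite <- HSd at 2. apply Rmult_lt_compat_r; [exact Hd'|].
      unfold S. pose proof (Rabs_pos (IZR a)); pose proof (Rabs_pos (IZR b)); lra.
  - intros s t. unfold piA; simpl. split.
    + replace (IZR a * (s + 2 * PI) + IZR b * t) with ((IZR a * s + IZR b * t) + 2 * IZR a * PI) by ring.
      replace (IZR c * (s + 2 * PI) + IZR d * t) with ((IZR c * s + IZR d * t) + 2 * IZR c * PI) by ring.
      rewrite per_Z1, per_Z2 by exact Hp. reflexivity.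
    + replace (IZR a * s + IZR b * (t + 2 * PI)) with ((IZR a * s + IZR b * t) + 2 * IZR b * PI) by ring.
      replace (IZR c * s + IZR d * (t + 2 * PI)) with ((IZR c * s + IZR d * t) + 2 * IZR d * PI) by ring.
      rewrite per_Z1, per_Z2 by exact Hp. reflexivity.
Qed.

Lemma piA_in_A al A f : Sfix al A -> in_A al f -> in_A al (piA A f).
Proof.
  intros HS [HCT HF]. split; [apply piA_CT2; exact HCT|].
  intros m n Hmn.
  destruct A as [a b c d]. destruct HS as [HA [EA PA]]. unfold lam in *; simpl in *.
  pose (dl := detM (mkM2 a b c d)).
  assert (Hdl : (dl * dl = 1)%Z) by (unfold dl; destruct HA as [H|H]; rewrite H; reflexivity).
  assert (Hdl' : dl = (a*d - b*c)%Z) by reflexivity.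
  set (m' := (dl * (d * m - c * n))%Z). set (n' := (dl * (- b * m + a * n))%Z).
  assert (Em : m = (a * m' + c * n')%Z).
  { unfold m', n'. rewrite <- (Z.mul_1_l m) at 1. rewrite <- Hdl. rewrite Hdl' at 2. ring. }
  assert (En : n = (b * m' + d * n')%Z).
  { unfold m', n'. rewrite <- (Z.mul_1_l n) at 1. rewrite <- Hdl. rewrite Hdl' at 2. ring. }
  assert (Hneg : IZR m' + al * IZR n' < 0).
  { assert (E : IZR m + al * IZR n = (IZR a + al * IZR b) * (IZR m' + al * IZR n')).
    { rewrite Em, En, !plus_IZR, !mult_IZR.
      assert (Hc : IZR c = al * (IZR a + al * IZR b) - al * IZR d) by lra. rewrite Hc. ring. }
    rewrite E in Hmn.
    destruct (Rlt_or_le (IZR m' + al * IZR n') 0) as [H|H]; [exact H|].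
    exfalso. assert (0 <= (IZR a + al * IZR b) * (IZR m' + al * IZR n')) by (apply Rmult_le_pos; lra). lra. }
  destruct (HF m' n' Hneg) as [H1 H2].
  rewrite Em, En. split.
  - replace (rsum_re (piA {| e11 := a; e12 := b; e21 := c; e22 := d |} f) (a * m' + c * n') (b * m' + d * n'))
      with (rsum_re f m' n'); [exact H1|].
    apply functional_extensionality. intro K. rewrite !rsum_re_rs.
    symmetry. apply (rs_piA Phi_re Phi_re_per f (proj2 HCT) (mkM2 a b c d) HA).
  - replace (rsum_im (piA {| e11 := a; e12 := b; e21 := c; e22 := d |} f) (a * m' + c * n') (b * m' + d * n'))
      with (rsum_im f m' n'); [exact H2|].
    apply functional_extensionality. intro K. rewrite !rsum_im_rs.
    symmetry. apply (rs_piA Phi_im Phi_im_per f (proj2 HCT) (mkM2 a b c d) HA).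
Qed.

Lemma piA_comp A B g s t : piA A (piA B g) s t = piA (mulM B A) g s t.
Proof.
  destruct A as [a b c d], B as [a' b' c' d']. unfold piA, mulM; simpl.
  rewrite !plus_IZR, !mult_IZR. f_equal; ring.
Qed.

Lemma piA_id g s t : piA idM g s t = g s t.
Proof. unfold piA, idM; simpl. f_equal; ring. Qed.

Lemma inv_mul_l A : inGL2Z A -> mulM (invM A) A = idM.
Proof.
  destruct A as [a b c d]; unfold inGL2Z, invM, mulM, idM; simpl; unfold detM; simpl.
  intros [H|H]; rewrite H; f_equal; nia.
Qed.

Lemma inv_mul_r A : inGL2Z A -> mulM A (invM A) = idM.
Proof.
  destruct A as [a b c d]; unfold inGL2Z, invM, mulM, idM; simpl; unfold detM; simpl.
  intros [H|H]; rewrite H; f_equal; nia.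
Qed.

Lemma isom_of_S al A : Sfix al A -> isom_aut_A al A.
Proof.
  intros HS. split; [|split].
  - intros f Hf. apply piA_in_A; assumption.
  - intros g Hg. exists (piA (invM A) g). split.
    + apply piA_in_A; [exact (proj1 (S_inv al A HS))|exact Hg].
    + intros s t. rewrite piA_comp, inv_mul_l by exact (proj1 HS). apply piA_id.
  - intros f Hf. split.
    + intros M HM s t.
      assert (E : f s t = piA (invM A) (piA A f) s t).
      { rewrite piA_comp, inv_mul_r by exact (proj1 HS). symmetry. apply piA_id. }
      rewrite E. unfold piA at 1. apply HM.
    + intros M HM s t. unfold piA. apply HM.
Qed.


Lemma telesc (T : nat -> R) K : sum_f_R0 (fun j => T (S j) - T j) K = T (S K) - T O.
Proof. induction K as [|K IH]; simpl; [ring|]. rewrite IH. ring. Qed.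

Lemma half_sin_nz K a : ~ (Z.of_nat (S K) | a)%Z -> sin (PI * IZR a / INR (S K)) <> 0.
Proof.
  intros Hnd H. apply sin_eq_0_0 in H. destruct H as [k Hk].
  apply Hnd. exists k.
  assert (HM : 0 < INR (S K)) by (apply lt_0_INR; lia).
  apply eq_IZR. rewrite mult_IZR, <- INR_IZR_INZ.
  assert (PI * IZR a = IZR k * PI * INR (S K)) by (rewrite <- Hk; field; lra).
  pose proof PI_RGT_0. nra.
Qed.

Lemma trig_sum K a phi : ~ (Z.of_nat (S K) | a)%Z ->
  sum_f_R0 (fun j => cos (IZR a * grid K j + phi)) K = 0 /\
  sum_f_R0 (fun j => sin (IZR a * grid K j + phi)) K = 0.
Proof.
  intros Hnd.
  set (M := INR (S K)).
  assert (HM : 0 < M) by (unfold M; apply lt_0_INR; lia).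
  set (th := 2 * PI * IZR a / M).
  assert (Hs : sin (th / 2) <> 0).
  { unfold th. replace (2 * PI * IZR a / M / 2) with (PI * IZR a / INR (S K)) by (unfold M; field; apply not_0_INR; lia).
    apply half_sin_nz; exact Hnd. }
  assert (Hg : forall j, IZR a * grid K j = INR j * th) by (intro j; unfold grid, th; fold M; field; lra).
  assert (HMth : INR (S K) * th = 2 * IZR a * PI) by (unfold th; fold M; field; lra).
  split.
  - set (T := fun j => sin (INR j * th - th / 2 + phi)).
    assert (E : 2 * sin (th / 2) * sum_f_R0 (fun j => cos (IZR a * grid K j + phi)) K = T (S K) - T O).
    { rewrite <- telesc. rewrite scal_sum. apply sum_eq. intros j _. unfold T. rewrite Hg, S_INR.
      replace ((INR j + 1) * th - th / 2 + phi) with (INR j * th + phi + th / 2) by field.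
      replace (INR j * th - th / 2 + phi) with (INR j * th + phi - th / 2) by field.
      rewrite form4. replace ((INR j * th + phi + th / 2 + (INR j * th + phi - th / 2)) / 2) with (INR j * th + phi) by field.
      replace ((INR j * th + phi + th / 2 - (INR j * th + phi - th / 2)) / 2) with (th / 2) by field. ring. }
    assert (T (S K) = T O).
    { unfold T. rewrite HMth. simpl INR. replace (2 * IZR a * PI - th / 2 + phi) with ((0 * th - th / 2 + phi) + 2 * IZR a * PI) by field.
      apply sin_Z. }
    rewrite H, Rminus_diag in E.
    apply Rmult_integral in E. destruct E as [E|E]; [exfalso; apply Hs; lra|exact E].
  - set (T := fun j => cos (INR j * th - th / 2 + phi)).
    assert (E : 2 * sin (th / 2) * sum_f_R0 (fun j => sin (IZR a * grid K j + phi)) K = - (T (S K) - T O)).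
    { rewrite <- telesc. rewrite scal_sum. rewrite <- (Rmult_1_l (sum_f_R0 _ K)). rewrite <- (Ropp_involutive 1), Ropp_mult_distr_l_reverse, scal_sum.
      apply Ropp_eq_compat. apply sum_eq. intros j _. unfold T. rewrite Hg, S_INR.
      replace ((INR j + 1) * th - th / 2 + phi) with (INR j * th + phi + th / 2) by field.
      replace (INR j * th - th / 2 + phi) with (INR j * th + phi - th / 2) by field.
      rewrite form2. replace ((INR j * th + phi + th / 2 + (INR j * th + phi - th / 2)) / 2) with (INR j * th + phi) by field.
      replace ((INR j * th + phi + th / 2 - (INR j * th + phi - th / 2)) / 2) with (th / 2) by field. ring. }
    assert (T (S K) = T O).
    { unfold T. rewrite HMth. simpl INR. replace (2 * IZR a * PI - th / 2 + phi) with ((0 * th - th / 2 + phi) + 2 * IZR a * PI) by field.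
      apply cos_Z. }
    rewrite H, Rminus_diag, Ropp_0 in E.
    apply Rmult_integral in E. destruct E as [E|E]; [exfalso; apply Hs; lra|exact E].
Qed.

Lemma nondiv K x : (x <> 0)%Z -> (Z.abs x < Z.of_nat (S K))%Z -> ~ (Z.of_nat (S K) | x)%Z.
Proof. intros H1 H2 [k Hk]. subst x. destruct (Z.eq_dec k 0); [subst; lia|]. nia. Qed.

Lemma double_sum K a b : (a <> 0 \/ b <> 0)%Z -> (Z.abs a < Z.of_nat (S K))%Z -> (Z.abs b < Z.of_nat (S K))%Z ->
  sum_f_R0 (fun j => sum_f_R0 (fun l => cos (IZR a * grid K j + IZR b * grid K l)) K) K = 0 /\
  sum_f_R0 (fun j => sum_f_R0 (fun l => sin (IZR a * grid K j + IZR b * grid K l)) K) K = 0.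
Proof.
  intros Hab Ha Hb.
  destruct (Z.eq_dec b 0) as [Hb0|Hb0].
  - subst b. destruct Hab as [Ha0|Ha0]; [|lia].
    destruct (trig_sum K a 0 (nondiv K a Ha0 Ha)) as [T1 T2].
    split.
    + transitivity (sum_f_R0 (fun j => cos (IZR a * grid K j + 0) * INR (S K)) K).
      * apply sum_eq. intros j _. rewrite <- sum_cte. apply sum_eq. intros l _. f_equal. ring.
      * rewrite <- scal_sum, T1. ring.
    + transitivity (sum_f_R0 (fun j => sin (IZR a * grid K j + 0) * INR (S K)) K).
      * apply sum_eq. intros j _. rewrite <- sum_cte. apply sum_eq. intros l _. f_equal. ring.
      * rewrite <- scal_sum, T2. ring.
  - split; apply sum_eq_R0; intros j _.
    + rewrite <- (proj1 (trig_sum K b (IZR a * grid K j) (nondiv K b Hb0 Hb))).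
      apply sum_eq. intros l _. f_equal. ring.
    + rewrite <- (proj2 (trig_sum K b (IZR a * grid K j) (nondiv K b Hb0 Hb))).
      apply sum_eq. intros l _. f_equal. ring.
Qed.

Definition ef (m n : Z) : CT2fun := fun s t => (cos (IZR m * s + IZR n * t), sin (IZR m * s + IZR n * t)).

Lemma rsum_ef m n m' n' K :
  rsum_re (ef m n) m' n' K = / (INR (S K) * INR (S K)) *
    sum_f_R0 (fun j => sum_f_R0 (fun l => cos (IZR (m - m') * grid K j + IZR (n - n') * grid K l)) K) K /\
  rsum_im (ef m n) m' n' K = / (INR (S K) * INR (S K)) *
    sum_f_R0 (fun j => sum_f_R0 (fun l => sin (IZR (m - m') * grid K j + IZR (n - n') * grid K l)) K) K.
Proof.
  split; unfold rsum_re, rsum_im, ef; f_equal; apply sum_eq; intros j _; apply sum_eq; intros l _; simpl.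
  - rewrite <- cos_minus. f_equal. rewrite !minus_IZR. ring.
  - rewrite <- sin_minus. f_equal. rewrite !minus_IZR. ring.
Qed.

Lemma Rabs_sin_le x : Rabs (sin x) <= Rabs x.
Proof.
  destruct (Rle_or_lt 1 (Rabs x)) as [H|H].
  - pose proof (SIN_bound x). unfold Rabs at 1. destruct (Rcase_abs (sin x)); lra.
  - pose proof PI_RGT_0. pose proof PI2_1.
    destruct (Rtotal_order x 0) as [Hx|[Hx|Hx]].
    + rewrite Rabs_left in H by lra.
      pose proof (sin_lt_x (-x) ltac:(lra)). rewrite sin_neg in H2.
      assert (sin x < 0) by (apply sin_lt_0_var; lra).
      rewrite Rabs_left by lra. rewrite Rabs_left by lra. lra.
    + subst. rewrite sin_0. lra.
    + rewrite Rabs_right in H by lra.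
      pose proof (sin_lt_x x Hx).
      assert (0 < sin x) by (apply sin_gt_0; lra).
      rewrite !Rabs_right by lra. lra.
Qed.

Lemma cos_lip x y : Rabs (cos x - cos y) <= Rabs (x - y).
Proof.
  rewrite form2. rewrite !Rabs_mult.
  pose proof (Rabs_sin_le ((x - y) / 2)). pose proof (SIN_bound ((x + y) / 2)).
  assert (Rabs (sin ((x + y) / 2)) <= 1) by (unfold Rabs; destruct Rcase_abs; lra).
  replace (Rabs (x - y)) with (2 * Rabs ((x - y) / 2)).
  2:{ unfold Rdiv. rewrite Rabs_mult, (Rabs_right (/ 2)) by lra. field. }
  replace (Rabs (-2)) with 2 by (rewrite Rabs_left; lra).
  pose proof (Rabs_pos (sin ((x - y) / 2))). pose proof (Rabs_pos (sin ((x + y) / 2))).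
  nra.
Qed.

Lemma sin_lip x y : Rabs (sin x - sin y) <= Rabs (x - y).
Proof.
  rewrite form4. rewrite !Rabs_mult.
  pose proof (Rabs_sin_le ((x - y) / 2)). pose proof (COS_bound ((x + y) / 2)).
  assert (Rabs (cos ((x + y) / 2)) <= 1) by (unfold Rabs; destruct Rcase_abs; lra).
  replace (Rabs (x - y)) with (2 * Rabs ((x - y) / 2)).
  2:{ unfold Rdiv. rewrite Rabs_mult, (Rabs_right (/ 2)) by lra. field. }
  replace (Rabs 2) with 2 by (rewrite Rabs_right; lra).
  pose proof (Rabs_pos (sin ((x - y) / 2))). pose proof (Rabs_pos (cos ((x + y) / 2))).
  nra.
Qed.

Lemma ef_CT2 m n : in_CT2 (ef m n).
Proof.
  split.
  - intros s t eps Heps. unfold ef; simpl.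
    set (S := Rabs (IZR m) + Rabs (IZR n) + 1).
    assert (HS : 1 <= S) by (unfold S; pose proof (Rabs_pos (IZR m)); pose proof (Rabs_pos (IZR n)); lra).
    exists (eps / S). split; [apply Rdiv_lt_0_compat; lra|].
    intros s' t' Hs Ht.
    assert (Hd' : 0 < eps / S) by (apply Rdiv_lt_0_compat; lra).
    assert (HSd : S * (eps / S) = eps) by (field; lra).
    assert (B : Rabs (IZR m * s' + IZR n * t' - (IZR m * s + IZR n * t)) < eps).
    { replace (IZR m * s' + IZR n * t' - (IZR m * s + IZR n * t)) with (IZR m * (s' - s) + IZR n * (t' - t)) by ring.
      eapply Rle_lt_trans; [apply lin_bound; eauto|].
      rewrite <- HSd at 2. apply Rmult_lt_compat_r; [exact Hd'|]. unfold S. lra. }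
    split; eapply Rle_lt_trans; [apply cos_lip|exact B|apply sin_lip|exact B].
  - intros s t. unfold ef. split.
    + replace (IZR m * (s + 2 * PI) + IZR n * t) with ((IZR m * s + IZR n * t) + 2 * IZR m * PI) by ring.
      rewrite cos_Z, sin_Z. reflexivity.
    + replace (IZR m * s + IZR n * (t + 2 * PI)) with ((IZR m * s + IZR n * t) + 2 * IZR n * PI) by ring.
      rewrite cos_Z, sin_Z. reflexivity.
Qed.

Lemma ef_in_A al m n : 0 <= IZR m + al * IZR n -> in_A al (ef m n).
Proof.
  intros H. split; [apply ef_CT2|].
  intros m' n' Hneg.
  assert (Hne : (m - m' <> 0 \/ n - n' <> 0)%Z).
  { destruct (Z.eq_dec (m - m') 0); destruct (Z.eq_dec (n - n') 0); try (left; assumption); try (right; assumption).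
    exfalso. assert (m = m') by lia. assert (n = n') by lia. subst. lra. }
  set (N0 := Z.to_nat (Z.abs (m - m') + Z.abs (n - n'))).
  assert (Ev : forall K, (K >= N0)%nat -> rsum_re (ef m n) m' n' K = 0 /\ rsum_im (ef m n) m' n' K = 0).
  { intros K HK. destruct (rsum_ef m n m' n' K) as [E1 E2]. rewrite E1, E2.
    assert (HK' : (Z.abs (m - m') + Z.abs (n - n') <= Z.of_nat K)%Z) by (unfold N0 in HK; lia).
    destruct (double_sum K (m - m') (n - n') Hne ltac:(lia) ltac:(lia)) as [D1 D2].
    rewrite D1, D2. split; ring. }
  split; intros eps Heps; exists N0; intros K HK; simpl; rewrite (proj1 (Ev K HK)) || rewrite (proj2 (Ev K HK));
    unfold R_dist; rewrite Rminus_0_r, Rabs_R0; exact Heps.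
Qed.

Lemma ef_notin_A al m n : IZR m + al * IZR n < 0 -> ~ in_A al (ef m n).
Proof.
  intros H [_ HF]. destruct (HF m n H) as [H1 _].
  assert (E : forall K, rsum_re (ef m n) m n K = 1).
  { intro K. rewrite (proj1 (rsum_ef m n m n K)). rewrite Z.sub_diag.
    transitivity (/ (INR (S K) * INR (S K)) * sum_f_R0 (fun _ => sum_f_R0 (fun _ => 1) K) K).
    - f_equal. apply sum_eq; intros j _; apply sum_eq; intros l _. rewrite Z.sub_diag. simpl IZR. rewrite !Rmult_0_l, Rplus_0_r. apply cos_0.
    - rewrite sum_cte, sum_cte. assert (0 < INR (S K)) by (apply lt_0_INR; lia). field. lra. }
  destruct (H1 (1/2) ltac:(lra)) as [N0 HN]. specialize (HN N0 (le_n _)).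
  rewrite E in HN. unfold R_dist in HN. simpl in HN. rewrite Rminus_0_r, Rabs_R1 in HN. lra.
Qed.

Lemma piA_ef A m n : piA A (ef m n) = ef (e11 A * m + e21 A * n) (e12 A * m + e22 A * n).
Proof.
  apply functional_extensionality; intro s. apply functional_extensionality; intro t.
  destruct A as [a b c d]. unfold piA, ef; simpl.
  replace (IZR m * (IZR a * s + IZR b * t) + IZR n * (IZR c * s + IZR d * t))
    with (IZR (a * m + c * n) * s + IZR (b * m + d * n) * t) by (rewrite !plus_IZR, !mult_IZR; ring).
  reflexivity.
Qed.


Lemma cone al (u v : R)
  (H : forall m n : Z, 0 <= IZR m + al * IZR n -> 0 <= u * IZR m + v * IZR n) :
  v = al * u /\ 0 <= u.
Proof.
  assert (Hu : 0 <= u).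
  { specialize (H 1%Z 0%Z). simpl in H. lra. }
  split; [|exact Hu].
  set (D := v - al * u).
  destruct (Req_dec D 0) as [HD|HD]; [unfold D in HD; lra|].
  exfalso.
  assert (Hn : exists n : Z, D * IZR n < - Rabs u).
  { destruct (Rlt_or_le 0 D) as [Dp|Dn].
    - exists (- up (Rabs u / D))%Z. rewrite opp_IZR.
      destruct (archimed (Rabs u / D)) as [A1 _].
      assert (D * IZR (up (Rabs u / D)) > D * (Rabs u / D)) by (apply Rmult_lt_compat_l; lra).
      replace (D * (Rabs u / D)) with (Rabs u) in H0 by (field; lra). lra.
    - assert (Dn' : D < 0) by lra.
      exists (up (Rabs u / - D))%Z.
      destruct (archimed (Rabs u / - D)) as [A1 _].
      assert (- D * IZR (up (Rabs u / - D)) > - D * (Rabs u / - D)) by (apply Rmult_lt_compat_l; lra).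
      replace (- D * (Rabs u / - D)) with (Rabs u) in H0 by (field; lra). lra. }
  destruct Hn as [n Hn].
  destruct (archimed (- (al * IZR n))) as [A1 A2].
  set (m := up (- (al * IZR n))) in *.
  specialize (H m n ltac:(lra)).
  assert (E : u * IZR m + v * IZR n = u * (IZR m + al * IZR n) + D * IZR n) by (unfold D; ring).
  assert (u * (IZR m + al * IZR n) <= Rabs u).
  { rewrite Rabs_right by lra. assert (IZR m + al * IZR n <= 1) by lra. nra. }
  lra.
Qed.

Lemma S_of_isom al (Hi : irrational al) A : inGL2Z A -> isom_aut_A al A -> Sfix al A.
Proof.
  intros HA [Hinto _].
  destruct A as [a b c d].
  assert (H : forall m n : Z, 0 <= IZR m + al * IZR n ->
     0 <= (IZR a + al * IZR b) * IZR m + (IZR c + al * IZR d) * IZR n).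
  { intros m n Hmn. pose proof (Hinto _ (ef_in_A al m n Hmn)) as Hin.
    rewrite piA_ef in Hin. simpl in Hin.
    destruct (Rlt_or_le (IZR (a * m + c * n) + al * IZR (b * m + d * n)) 0) as [Hl|Hl].
    - exfalso. exact (ef_notin_A al _ _ Hl Hin).
    - rewrite !plus_IZR, !mult_IZR in Hl. lra. }
  destruct (cone al _ _ H) as [E Hu].
  split; [exact HA|]. unfold lam; simpl. split; [exact E|].
  destruct Hu as [Hu|Hu]; [exact Hu|].
  exfalso. destruct (irr_lin al Hi a b ltac:(lra)) as [Ha Hb]. subst a b.
  unfold inGL2Z, detM in HA; simpl in HA. lia.
Qed.

Lemma isom_iff_S al (Hi : irrational al) A : inGL2Z A -> (isom_aut_A al A <-> Sfix al A).
Proof.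
  intros HA. split; [apply S_of_isom; assumption|apply isom_of_S].
Qed.


Theorem mainTheorem16 (r p q s k : Z)
  (hp : (0 < p)%Z) (hq : (0 < q)%Z) (hs : (0 < s)%Z)
  (hk : k = 1%Z \/ k = (-1)%Z)
  (hsodd : Z.odd s = true)
  (hrs : Z.gcd r s = 1%Z) (hpq : Z.gcd p q = 1%Z)
  (hpos : 0 < alpha_of r p q s k)
  (hirr : irrational (alpha_of r p q s k)) :
  (~ pell_solvable (N_of r p q s) (-1) ->
   forall x1 y1 : Z, fundamental_solution (N_of r p q s) 1 x1 y1 ->
   forall A : M2, inGL2Z A ->
     (isom_aut_A (alpha_of r p q s k) A <->
      exists n : Z, A = powM (genM r p q s 1 x1 y1) n))
  /\
  (pell_solvable (N_of r p q s) (-1) ->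
   forall x1' y1' : Z, fundamental_solution (N_of r p q s) (-1) x1' y1' ->
   forall A : M2, inGL2Z A ->
     (isom_aut_A (alpha_of r p q s k) A <->
      exists n : Z, A = powM (genM r p q s k x1' y1') n)).
Proof.
  destruct (setup r p q s hp hq hs) as [d [e [f [Hd [E1 [E2 [HN [Hef Hgen]]]]]]]].
  rewrite HN. split.
  - intros Hns x1 y1 Hfs A HA. rewrite (isom_iff_S _ hirr A HA). rewrite Hgen.
    exact (case1 r p q s k d e f hp hq hs hk Hd E1 E2 hsodd hrs Hef hirr x1 y1 Hns Hfs A).
  - intros _ x1 y1 Hfs A HA. rewrite (isom_iff_S _ hirr A HA). rewrite Hgen.
    exact (case2 r p q s k d e f hp hq hs hk Hd E1 E2 hsodd hrs Hef hirr x1 y1 Hfs A).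
Qed.
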